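(* Let $X$ be any topological space (no separation axioms assumed). If $X$ is an Alster space, then $X$ is totally Lindelöf.
   Context: A filter base on a set $X$ is a nonempty family $\mathcal{F}\subseteq\mathcal{P}(X)$ such that $\emptyset\notin\mathcal{F}$ and $F_0\cap F_1\in\mathcal{F}$ for all $F_0,F_1\in\mathcal{F}$. A filter base $\mathcal{F}$ is stable under countable intersections if for every countable $S\subseteq\mathcal{F}$ there is $H\in\mathcal{F}$ with $H\subseteq\bigcap S$. For $\mathcal{F}\subseteq\mathcal{P}(X)$, $ad(\mathcal{F})=\bigcap\{\overline{F}: F\in\mathcal{F}\}$. A filter base $\mathcal{F}$ on $X$ is total if every filter base $\mathcal{H}\supseteq\mathcal{F}$ on $X$ satisfies $ad(\mathcal{H})\neq\emptyset$. $X$ is totally Lindelöf if every filter base on $X$ stable under countable intersections is contained in some total filter base on $X$ stable under countable intersections. A $G_\delta$ set is a countable intersection of open sets. An Alster covering of $X$ is a family $\mathcal{G}$ of $G_\delta$ subsets of $X$ such that every compact $K\subseteq X$ is contained in some member of $\mathcal{G}$; $X$ is an Alster space if every Alster covering of $X$ has a countable subfamily covering $X$. *)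

(* Defs.v *)
From HB Require Import structures.
From mathcomp Require Import all_boot all_order all_algebra.
From mathcomp Require Import all_classical all_reals all_analysis.
Set Implicit Arguments. Unset Strict Implicit. Unset Printing Implicit Defensive.
Local Open Scope classical_set_scope.

Section Defs.
Variable X : topologicalType.

Definition filter_base (F : set (set X)) : Prop :=
  F !=set0 /\ ~ F set0 /\ (forall F0 F1, F F0 -> F F1 -> F (F0 `&` F1)).

Definition stable_countable_inter (F : set (set X)) : Prop :=
  forall S : set (set X), S `<=` F -> countable S ->
    exists2 H, F H & H `<=` \bigcap_(A in S) A.

Definition adh (F : set (set X)) : set X := \bigcap_(A in F) closure A.

Definition total_fb (F : set (set X)) : Prop :=
  filter_base F /\
  forall H : set (set X), filter_base H -> F `<=` H -> adh H !=set0.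

Definition totally_Lindelof : Prop :=
  forall F : set (set X), filter_base F -> stable_countable_inter F ->
    exists G : set (set X), [/\ F `<=` G, total_fb G & stable_countable_inter G].

Definition Gdelta (A : set X) : Prop :=
  exists U : nat -> set X, (forall n, open (U n)) /\ A = \bigcap_n U n.

Definition Alster_covering (G : set (set X)) : Prop :=
  (forall A, G A -> Gdelta A) /\
  (forall K : set X, compact K -> exists2 A, G A & K `<=` A).

Definition Alster_space : Prop :=
  forall G : set (set X), Alster_covering G ->
    exists2 C : set (set X), C `<=` G /\ countable C & \bigcup_(A in C) A = setT.
End Defs.

(* Main.v *)
Require Import Defs.
From mathcomp Require Import all_boot all_order all_algebra.
From mathcomp Require Import all_classical all_reals all_analysis.
Local Open Scope classical_set_scope.

Lemma gdelta_bigcap (X : topologicalType) (S : set (set X)) :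
  countable S -> (forall A, S A -> open A) -> Gdelta (\bigcap_(A in S) A).
Proof.
move=> cS oS.
have [g gS] : exists g : nat -> set X, set_surj setT S g by apply/pcard_surjP.
pose e n := if pselect (S (g n)) then g n else setT.
exists e; split.
- move=> n; rewrite /e; case: pselect => Sg; [exact: oS | exact: openT].
- apply/seteqP; split => x hx.
  + move=> n _; rewrite /e; case: pselect => // Sg; exact: hx.
  + move=> A SA; have [n _ gn] := gS A SA; have := hx n I.
    by rewrite /e; case: pselect => //; rewrite gn.
Qed.

Lemma countableU' (T : Type) (A B : set T) :
  countable A -> countable B -> countable (A `|` B).
Proof.
move=> cA cB.
have -> : A `|` B = \bigcup_(b in [set: bool]) (if b then A else B).
  apply/seteqP; split => x.
  - by case=> h; [exists true | exists false].
  - by case=> -[] _ h; [left | right].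
by apply: bigcup_countable => // -[].
Qed.

Theorem mainTheorem2 (X : topologicalType) :
  Alster_space X -> totally_Lindelof X.
Proof.
move=> HA F [[f0 Ff0] [nF0 FI]] Fst.
have [K cK HK] : exists2 K : set X, compact K & (forall A, Gdelta A -> K `<=` A ->
    forall f, F f -> A `&` f !=set0).
  apply: contrapT => nK.
  pose G0 := [set A : set X | Gdelta A /\ exists2 f, F f & A `&` f = set0].
  have [C [CG0 cC] CT] : exists2 C, C `<=` G0 /\ countable C & \bigcup_(A in C) A = setT.
    apply: HA; split; first by move=> A [].
    move=> K cK; apply: contrapT => nA; apply: nK; exists K => // A GA KA f Ff.
    apply/set0P/negP => /eqP Af; apply: nA; exists A => //; split => //; by exists f.
  have [ch hch] : {ch : set X -> set X & forall A, C A -> F (ch A) /\ A `&` ch A = set0}.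
    apply: (@choice _ _ (fun A f => C A -> F f /\ A `&` f = set0)) => A.
    have [CA|nCA] := pselect (C A).
    - have [_ [f Ff Af]] := CG0 A CA; by exists f.
    - by exists setT.
  have [g Fg gS] : exists2 g, F g & g `<=` \bigcap_(A in ch @` C) A.
    apply: Fst.
    - by move=> _ [A CA <-]; exact: (hch A CA).1.
    - exact: sub_countable (card_image_le _ _) cC.
  have [x gx] : g !=set0 by apply/set0P/negP => /eqP g0; apply: nF0; rewrite -g0.
  have : (\bigcup_(A in C) A) x by rewrite CT.
  move=> [A CA Ax].
  have chx : ch A x by apply: (gS x gx); exists A.
  have : (A `&` ch A) x by [].
  by rewrite (hch A CA).2.
pose G := [set B : set X | exists f, exists T : set (set X),
  [/\ F f, countable T, (forall U, T U -> open U /\ K `<=` U) &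
      B = f `&` \bigcap_(U in T) U]].
have hK' : forall f T, F f -> countable T -> (forall U, T U -> open U /\ K `<=` U) ->
    f `&` \bigcap_(U in T) U !=set0.
  move=> f T Ff cT hT; rewrite setIC; apply: HK => //.
  - by apply: gdelta_bigcap => // U TU; exact: (hT U TU).1.
  - by move=> x Kx U TU; exact: (hT U TU).2.
exists G; split.
- move=> f Ff; exists f, set0; split => //; by rewrite bigcap_set0 setIT.
- split.
  + split; first by exists f0; exists f0, set0; split => //; rewrite bigcap_set0 setIT.
    split.
    * move=> [f [T [Ff cT hT e]]]; have := hK' f T Ff cT hT; rewrite -e.
      by move=> [].
    * move=> _ _ [f1 [T1 [Ff1 cT1 hT1 ->]]] [f2 [T2 [Ff2 cT2 hT2 ->]]].
      exists (f1 `&` f2), (T1 `|` T2); split.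
      -- exact: FI.
      -- exact: countableU'.
      -- by move=> U [/hT1|/hT2].
      -- by rewrite bigcap_setU setIACA.
  + move=> H [[h0 Hh0] [nH0 HI]] GH.
    have hKh : forall h, H h -> K `&` closure h !=set0.
      move=> h Hh; apply/set0P/negP => /eqP e.
      have GU : G (f0 `&` \bigcap_(U in [set ~` closure h]) U).
        exists f0, [set ~` closure h]; split => //.
        move=> U ->; split; first by rewrite openC; exact: closed_closure.
        move=> x Kx cx; have : (K `&` closure h) x by [].
        by rewrite e.
      apply: nH0.
      suff <- : (f0 `&` \bigcap_(U in [set ~` closure h]) U) `&` h = set0.
        by apply: HI => //; exact: GH.
      rewrite bigcap_set1; apply/seteqP; split => // x [[_ nx] hx].
      by apply: nx; exact: subset_closure.
    pose Phi := filter_from H (fun h => K `&` closure h).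
    have PhiF : ProperFilter Phi.
      apply: filter_from_proper; last exact: hKh.
      apply: filter_from_filter; first by exists h0.
      move=> i j Hi Hj; exists (i `&` j); first exact: HI.
      move=> x [Kx cx]; split; split => //.
      + exact: (closure_subset (@subIsetl _ i j)) x cx.
      + exact: (closure_subset (@subIsetr _ i j)) x cx.
    have PhiK : Phi K by exists h0 => // y [].
    have [x [Kx cPx]] := cK Phi PhiF PhiK.
    exists x => h Hh.
    have ech : closure h = closure (closure h).
      by apply/closure_id; exact: closed_closure.
    rewrite {1}ech.
    move=> B nB.
    have PhiKh : Phi (K `&` closure h) by exists h.
    have [y [[_ cy] By]] := cPx (K `&` closure h) B PhiKh nB.
    by exists y.
- move=> S SG cS.
  have [ch hch] : {ch : set X -> set X * set (set X) & forall B, S B ->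
      [/\ F (ch B).1, countable (ch B).2,
         (forall U, (ch B).2 U -> open U /\ K `<=` U) &
         B = (ch B).1 `&` \bigcap_(U in (ch B).2) U]}.
    apply: (@choice _ _ (fun B (p : set X * set (set X)) => S B ->
      [/\ F p.1, countable p.2,
         (forall U, p.2 U -> open U /\ K `<=` U) &
         B = p.1 `&` \bigcap_(U in p.2) U])) => B.
    have [SB|nSB] := pselect (S B).
    - have [f [T hT]] := SG B SB; by exists (f, T).
    - by exists (setT, set0).
  have [g Fg gS] : exists2 g, F g & g `<=` \bigcap_(B in (fun B => (ch B).1) @` S) B.
    apply: Fst.
    - by move=> _ [B SB <-]; have [] := hch B SB.
    - exact: sub_countable (card_image_le _ _) cS.
  exists (g `&` \bigcap_(U in \bigcup_(B in S) (ch B).2) U).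
  + exists g, (\bigcup_(B in S) (ch B).2); split => //.
    * by apply: bigcup_countable => // B SB; have [] := hch B SB.
    * by move=> U [B SB hU]; have [_ _ h _] := hch B SB; exact: h.
  + move=> x [gx cx] B SB; have [_ _ _ ->] := hch B SB; split.
    * by apply: (gS x gx); exists B.
    * by move=> U hU; apply: cx; exists B.
Qed.
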